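(* Let $K$ be a field of characteristic $0$, let $W\le S_d$ be a permutation group and let $\chi$ be a one-dimensional character of $W$. For every $n\in\mathbb N_0$, $$g_n(\chi;x_0,\dots,x_n)=Z(\chi;p_1,\dots,p_d),$$ where $p_s=x_0^s+\cdots+x_n^s$ are the power sums in the $n+1$ variables $x_0,\dots,x_n$.
   Context: A one-dimensional character of $W$ is a homomorphism $W\to K^\times$. $\mathbb N_0=\{0,1,2,\dots\}$, $[0,n]=\{0,1,\dots,n\}$. $W$ acts on $[0,n]^d$ by $\sigma(i_1,\dots,i_d)=(i_{\sigma^{-1}(1)},\dots,i_{\sigma^{-1}(d)})$. $J(n,d,\chi)$ is the set of those $j\in[0,n]^d$ that are lexicographically minimal in their $W$-orbit and satisfy $\chi(\sigma)=1$ for all $\sigma$ in the stabilizer $W_j$. $g_n(\chi;x_0,\dots,x_n)=\sum_{j\in J(n,d,\chi)}x_{j_1}\cdots x_{j_d}$. $Z(\chi;p_1,\dots,p_d)=|W|^{-1}\sum_{\sigma\in W}\chi(\sigma)p_1^{c_1(\sigma)}\cdots p_d^{c_d(\sigma)}$, where $c_s(\sigma)$ is the number of cycles of length $s$ of $\sigma$. *)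

(* Defs.v *)
From HB Require Import structures.
From mathcomp Require Import all_boot all_order all_algebra all_fingroup.
From mathcomp Require Import mpoly.
Set Implicit Arguments. Unset Strict Implicit. Unset Printing Implicit Defensive.
Import GRing.Theory.
Local Open Scope ring_scope.

Definition midx (n d : nat) := {ffun 'I_d -> 'I_n.+1}.

Definition pact (n d : nat) (s : {perm 'I_d}) (j : midx n d) : midx n d :=
  [ffun k => j ((s^-1)%g k)].

Definition lexle (n d : nat) (j j' : midx n d) : bool :=
  (j == j') ||
  [exists k : 'I_d, [forall l : 'I_d, (l < k)%N ==> (j l == j' l)] && (j k < j' k)%N].

Definition one_dim_char (K : fieldType) (d : nat) (W : {group {perm 'I_d}})
    (chi : {perm 'I_d} -> K) : Prop :=
  (forall s, s \in W -> chi s != 0) /\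
  (forall s t, s \in W -> t \in W -> chi (s * t)%g = chi s * chi t).

Definition Jset (K : fieldType) (n d : nat) (W : {group {perm 'I_d}})
    (chi : {perm 'I_d} -> K) : {set midx n d} :=
  [set j : midx n d |
     [forall s in W, lexle j (pact s j)] &&
     [forall s in W, (pact s j == j) ==> (chi s == 1)]].

Definition g_poly (K : fieldType) (n d : nat) (W : {group {perm 'I_d}})
    (chi : {perm 'I_d} -> K) : {mpoly K[n.+1]} :=
  \sum_(j in Jset n W chi) \prod_(k < d) 'X_(j k).

Definition ncycles (d : nat) (sigma : {perm 'I_d}) (s : nat) : nat :=
  #|[set C in porbits sigma | #|C| == s]|.

Definition psum (K : fieldType) (n s : nat) : {mpoly K[n.+1]} :=
  \sum_(i < n.+1) 'X_i ^+ s.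

Definition Z_poly (K : fieldType) (n d : nat) (W : {group {perm 'I_d}})
    (chi : {perm 'I_d} -> K) : {mpoly K[n.+1]} :=
  (#|W|%:R)^-1 *: \sum_(sigma in W)
     chi sigma *: \prod_(1 <= s < d.+1) psum K n s ^+ ncycles sigma s.

(* Main.v *)
Require Import Defs.
From HB Require Import structures.
From mathcomp Require Import all_boot all_order all_algebra all_fingroup.
From mathcomp Require Import mpoly.
Import GRing.Theory.
Local Open Scope ring_scope.

Section Lex.
Variables n d : nat.
Implicit Types a b c : midx n d.

Lemma lexle_refl a : lexle a a.
Proof. by rewrite /lexle eqxx. Qed.

Lemma lexle_antisym a b : lexle a b -> lexle b a -> a = b.
Proof.
rewrite /lexle; case: eqP => [//|_] /= /existsP[k1 /andP[/forallP H1 lt1]].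
case: eqP => [->//|_] /= /existsP[k2 /andP[/forallP H2 lt2]].
case: (ltngtP k1 k2) => h.
- by have := H2 k1; rewrite h /= => /eqP e; rewrite e ltnn in lt1.
- by have := H1 k2; rewrite h /= => /eqP e; rewrite e ltnn in lt2.
- have e: k1 = k2 by apply: val_inj.
  by subst; have := ltn_trans lt1 lt2; rewrite ltnn.
Qed.

Lemma lexle_trans : transitive (@lexle n d).
Proof.
move=> b a c; rewrite /lexle.
case: (eqVneq a b) => [->//|nab] /= /existsP[k1 /andP[/forallP H1 lt1]].
case: (eqVneq b c) => [<-|nbc] /=.
  by move=> _; apply/orP; right; apply/existsP; exists k1; rewrite lt1 andbT; apply/forallP.
move=> /existsP[k2 /andP[/forallP H2 lt2]]; apply/orP; right; apply/existsP.
case: (ltngtP k1 k2) => h.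
- exists k1; apply/andP; split.
    apply/forallP => l; apply/implyP => hl.
    rewrite (eqP (implyP (H1 l) hl)); apply: (implyP (H2 l)); exact: ltn_trans hl h.
  by have := H2 k1; rewrite h /= => /eqP <-.
- exists k2; apply/andP; split.
    apply/forallP => l; apply/implyP => hl.
    rewrite (eqP (implyP (H1 l) (ltn_trans hl h))); exact: (implyP (H2 l)).
  by have := H1 k2; rewrite h /= => /eqP ->.
- have e: k1 = k2 by apply: val_inj.
  subst; exists k2; apply/andP; split; last exact: ltn_trans lt1 lt2.
  apply/forallP => l; apply/implyP => hl.
  by rewrite (eqP (implyP (H1 l) hl)); apply: (implyP (H2 l)).
Qed.

Lemma lexle_total : total (@lexle n d).
Proof.
move=> a b; case: (eqVneq a b) => [->|nab]; first by rewrite lexle_refl.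
have [k0 nk0] : exists k, a k != b k.
  apply/existsP; apply: contraR nab => /existsPn H; apply/eqP/ffunP => k.
  by apply/eqP; move: (H k); rewrite negbK.
case: (@arg_minnP _ k0 (fun k => a k != b k) (fun k : 'I_d => (k : nat)) nk0) => k nk kmin.
have pre : forall l : 'I_d, (l < k)%N -> a l == b l.
  move=> l hl; apply: contraLR hl => hn; rewrite -leqNgt; exact: kmin.
case: (ltngtP (a k) (b k)) => h.
- apply/orP; left; apply/orP; right; apply/existsP; exists k; rewrite h andbT.
  by apply/forallP => l; apply/implyP; exact: pre.
- apply/orP; right; apply/orP; right; apply/existsP; exists k; rewrite h andbT.
  by apply/forallP => l; apply/implyP => hl; rewrite eq_sym; exact: pre.
- by case/eqP: nk; apply: val_inj.
Qed.

Lemma lex_min (A : {set midx n d}) : A != set0 ->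
  exists2 m, m \in A & forall y, y \in A -> lexle m y.
Proof.
move=> /set0Pn [x xA].
have me := mem_sort (@lexle n d) (enum A).
have so : sorted (@lexle n d) (sort (@lexle n d) (enum A)).
  by apply: sort_sorted; exact: lexle_total.
move: me so; case: (sort _ _) => [|m s] me so.
  by have := me x; rewrite mem_enum xA.
have mA : m \in A by rewrite -mem_enum -me mem_head.
exists m => // y yA; have : y \in m :: s by rewrite me mem_enum.
rewrite inE => /orP[/eqP->|ys]; first exact: lexle_refl.
by have /allP := order_path_min lexle_trans so; apply.
Qed.

Definition actf (j : midx n d) (s : {perm 'I_d}) := pact s j.

Lemma actf1 : actf^~ 1%g =1 id.
Proof. by move=> j; apply/ffunP => k; rewrite ffunE invg1 perm1. Qed.

Lemma actfM : forall x, act_morph actf x.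
Proof.
by move=> j a b; apply/ffunP => k; rewrite !ffunE invMg permM.
Qed.

Canonical pact_action := TotalAction actf1 actfM.

End Lex.


Section Cyc.
Variables (K : fieldType) (n d : nat).

Definition mon (j : midx n d) : {mpoly K[n.+1]} := \prod_(k < d) 'X_(j k).

Lemma mon_act s j : mon (pact s j) = mon j.
Proof.
rewrite /mon (reindex_inj (@perm_inj _ s)) /=.
by apply: eq_bigr => k _; rewrite ffunE permK.
Qed.

Lemma fixedP (s : {perm 'I_d}) (j : midx n d) :
  reflect (forall k y, y \in porbit s k -> j y = j k) (pact s j == j).
Proof.
apply: (iffP eqP) => [E k y | H].
  rewrite -porbitV => /porbitP [i ->]; elim: i => [|i IH]; first by rewrite expg0 perm1.
  rewrite expgSr permM.
  have := congr1 (fun f : midx n d => f ((s^-1 ^+ i)%g k)) E; rewrite ffunE => ->; exact: IH.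
apply/ffunP => k; rewrite ffunE; apply: H.
by have := mem_porbit s^-1 1 k; rewrite expg1 porbitV.
Qed.

Lemma card_le_d (C : {set 'I_d}) : (#|C| < d.+1)%N.
Proof. by rewrite ltnS; have := max_card C; rewrite card_ord. Qed.

Lemma prod_porbits (s : {perm 'I_d}) : \prod_(C in porbits s) psum K n #|C| =
   \prod_(1 <= l < d.+1) psum K n l ^+ ncycles s l.
Proof.
rewrite (partition_big (fun C : {set 'I_d} => inord #|C| : 'I_d.+1) predT) //=.
rewrite (eq_bigr (fun l : 'I_d.+1 => psum K n l ^+ ncycles s l)); last first.
  move=> l _.
  rewrite (eq_bigr (fun _ => psum K n l)); last first.
    by move=> C /andP[_ /eqP <-]; rewrite inordK // card_le_d.
  rewrite prodr_const /ncycles; congr (_ ^+ _); apply: eq_card => C.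
  rewrite !inE; congr (_ && _).
  by rewrite -val_eqE /= inordK // card_le_d.
rewrite -(big_mkord predT (fun l => psum K n l ^+ ncycles s l)) [X in X = _]big_ltn //=.
suff -> : ncycles s 0 = 0%N by rewrite expr0 mul1r.
apply/eqP; rewrite cards_eq0; apply/eqP/setP => C; rewrite !inE.
apply/negbTE; apply/negP => /andP[/imsetP[x _ ->]].
by rewrite (negbTE (card_porbit_neq0 s x)).
Qed.


Section B2.
Variable s : {perm 'I_d}.

Definition toF (j : midx n d) : {ffun {set 'I_d} -> 'I_n.+1} :=
  [ffun C => if C \in porbits s then
     (if [pick k in C] is Some k then j k else ord0) else ord0].
Definition ofF (f : {ffun {set 'I_d} -> 'I_n.+1}) : midx n d :=
  [ffun k => f (porbit s k)].

Lemma porbit_of (C : {set 'I_d}) k : C \in porbits s -> k \in C -> porbit s k = C.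
Proof.
by case/imsetP => x _ -> kx; apply/eqP; rewrite eq_porbit_mem.
Qed.

Lemma ofF_toF j : (ofF (toF j) == j) = (pact s j == j).
Proof.
apply/eqP/fixedP => [E k y yk | H].
  have Py : porbit s y = porbit s k by apply/eqP; rewrite eq_porbit_mem.
  have := congr1 (fun f : midx n d => f y) E; rewrite !ffunE imset_f // => <-.
  have := congr1 (fun f : midx n d => f k) E; rewrite !ffunE imset_f // => <-.
  by rewrite Py.
apply/ffunP => k; rewrite !ffunE imset_f //.
case: pickP => [y yk|]; first exact: H.
by move/(_ k); rewrite porbit_id.
Qed.

Lemma prod_psum : \prod_(C in porbits s) psum K n #|C| =
   \sum_(j : midx n d | pact s j == j) mon j.
Proof.
rewrite /psum.
under eq_bigr => C _ do under eq_bigr => i _ do rewrite -(prodr_const (mem C)).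
rewrite (big_distr_big ord0) /=.
rewrite (reindex_onto toF ofF); last first.
  move=> f /familyP fP; apply/ffunP => C; rewrite !ffunE.
  case: ifP => CP.
    case: pickP => [k kC|none]; first by rewrite ffunE (porbit_of _ _ CP kC).
    by case/imsetP: CP => x _ E; move: (none x); rewrite E porbit_id.
  by have := fP C; rewrite /= CP inE => /eqP ->.
apply: eq_big => j.
  rewrite ofF_toF andbC; case: (pact s j == j) => //=.
  by apply/familyP => C; rewrite ffunE /=; case: ifP => _ //; rewrite inE.
move=> /andP[_ /eqP E].
rewrite /mon (partition_big (porbit s) (mem (porbits s))) /=; last first.
  by move=> k _; rewrite imset_f.
apply: eq_bigr => C CP.
have -> : \prod_(i < d | porbit s i == C) 'X_(j i) = \prod_(i in C) ('X_(j i) : {mpoly K[n.+1]}).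
  apply: eq_bigl => k /=; apply/eqP/idP => [<-|kC]; first exact: porbit_id.
  exact: porbit_of.
apply: eq_bigr => k kC.
by have := congr1 (fun f : midx n d => f k) E; rewrite ffunE (porbit_of _ _ CP kC) => ->.
Qed.

End B2.

End Cyc.


Section Main.
Local Open Scope group_scope.
Local Open Scope ring_scope.
Variables (K : fieldType) (d : nat) (W : {group {perm 'I_d}}).
Variables (chi : {perm 'I_d} -> K) (n : nat).
Hypothesis Hchi : one_dim_char W chi.

Local Notation to := (pact_action n d).
Local Notation mon := (@mon K n d).

Lemma toE (j : midx n d) s : to j s = pact s j.
Proof. by []. Qed.

Definition triv (j : midx n d) := [forall s in W, (pact s j == j) ==> (chi s == 1)].
Definition cc (j : midx n d) := \sum_(s in W | pact s j == j) chi s.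

Lemma chi1 : chi 1%g = 1.
Proof.
have h1 := Hchi.1 _ (group1 W); have := Hchi.2 _ _ (group1 W) (group1 W).
rewrite mulg1 => e; apply: (mulfI h1); by rewrite mulr1 -e.
Qed.

Lemma inC (j : midx n d) s : (s \in 'C_W[j | to]) = (s \in W) && (pact s j == j).
Proof. by rewrite inE; congr (_ && _); apply/astab1P/eqP. Qed.

Lemma cc_triv j : triv j -> cc j = #|'C_W[j | to]|%:R.
Proof.
move=> /forall_inP T; rewrite /cc.
rewrite (eq_bigr (fun _ => 1)); last by move=> s /andP[sW fs]; apply/eqP; exact: (implyP (T s sW)).
rewrite (eq_bigl (mem ('C_W[j | to])%g)); last by move=> s; rewrite /= inC.
by rewrite sumr_const.
Qed.

Lemma cc_ntriv j : ~~ triv j -> cc j = 0.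
Proof.
move=> /forallPn [t]; rewrite negb_imply => /andP[tW]; rewrite negb_imply => /andP[ft nt].
have E : cc j = chi t * cc j.
  rewrite /cc [LHS](reindex_inj (mulgI t)) /= mulr_sumr.
  apply: eq_big => [s|s /andP[sW _]]; last first.
    by rewrite (groupMl _ tW) in sW; rewrite Hchi.2.
  by rewrite groupMl // -!toE actM [to j t]toE (eqP ft).
apply/eqP; move: E => /eqP; rewrite -subr_eq0 -{1}[cc j]mul1r -mulrBl mulf_eq0.
by rewrite subr_eq0 eq_sym (negbTE nt).
Qed.

Lemma triv_act j a : a \in W -> triv j -> triv (pact a j).
Proof.
move=> aW /forall_inP T; apply/forall_inP => s sW; apply/implyP => /eqP fs.
have tW : (a * s * a^-1)%g \in W by rewrite !groupM ?groupV.
have := implyP (T _ tW); rewrite -toE !actM !toE fs -toE actK eqxx => /(_ isT) /eqP.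
rewrite !Hchi.2 ?groupM ?groupV // => e.
have : chi a * chi a^-1%g = 1 by rewrite -Hchi.2 ?groupV // mulgV chi1.
by move=> e2; apply/eqP; rewrite -e mulrAC e2 mul1r.
Qed.

Lemma triv_orbit j y : y \in orbit to W j -> triv y = triv j.
Proof.
case/orbitP => a aW <-; apply/idP/idP; last exact: triv_act.
by move=> T; have := triv_act _ _ (groupVr aW) T; rewrite -toE actK.
Qed.
Arguments triv_orbit {j y}.

Lemma cardC_orbit j y : y \in orbit to W j -> #|'C_W[y | to]| = #|'C_W[j | to]|.
Proof.
move=> yj; have Oy : orbit to W y = orbit to W j by apply/orbit_eqP.
have := card_orbit_stab to W y; have := card_orbit_stab to W j.
rewrite Oy => <- /eqP; rewrite eqn_pmul2l //.
  by move/eqP.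
by apply/card_gt0P; exists j; exact: orbit_refl.
Qed.
Arguments cardC_orbit {j y}.

Lemma cc_orbit j y : y \in orbit to W j -> cc y = cc j.
Proof.
move=> yj; case: (boolP (triv j)) => T.
  by rewrite !cc_triv ?(triv_orbit yj) // (cardC_orbit yj).
by rewrite !cc_ntriv ?(triv_orbit yj).
Qed.
Arguments cc_orbit {j y}.

Lemma mon_orbit j y : y \in orbit to W j -> mon y = mon j.
Proof. by case/orbitP => a _ <-; exact: mon_act. Qed.
Arguments mon_orbit {j y}.

Lemma per_orbit x :
  \sum_(j | orbit to W j == orbit to W x) cc j *: mon j =
  \sum_(j | (j \in Jset n W chi) && (orbit to W j == orbit to W x)) #|W|%:R *: mon j.
Proof.
have oE : forall j, (orbit to W j == orbit to W x) = (j \in orbit to W x).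
  by move=> j; apply/eqP/idP => [<-|jx]; [exact: orbit_refl | exact: orbit_eqP].
rewrite (eq_bigl (mem (orbit to W x))) //.
rewrite (eq_bigr (fun _ => cc x *: mon x)); last first.
  by move=> j jx; rewrite (cc_orbit jx) (mon_orbit jx).
rewrite sumr_const scalerMnl.
case: (boolP (triv x)) => T; last first.
  rewrite cc_ntriv // mul0rn scale0r big_pred0 // => j.
  rewrite oE inE; case: (boolP (j \in orbit to W x)) => jx; rewrite ?andbF //.
  by rewrite andbT -/(triv j) (triv_orbit jx) (negbTE T) andbF.
have [m mO mmin] : exists2 m, m \in orbit to W x & forall y, y \in orbit to W x -> lexle m y.
  by apply: lex_min; apply/set0Pn; exists x; exact: orbit_refl.
rewrite (big_pred1 m); last first.
  move=> j; rewrite oE inE /=; apply/idP/eqP => [/andP[/andP[/forall_inP L _] jO]|->].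
    have Oj : orbit to W j = orbit to W x by apply/orbit_eqP.
    have mj : m \in orbit to W j by rewrite Oj.
    case/orbitP: mj => a aW jm.
    by apply: lexle_antisym; [rewrite -jm; exact: L | exact: mmin].
  rewrite mO -/(triv m) (triv_orbit mO) T !andbT; apply/forall_inP => s sW.
  have Om : orbit to W m = orbit to W x by apply/orbit_eqP.
  by apply: mmin; rewrite -toE -Om; exact: mem_orbit.
rewrite (mon_orbit mO) cc_triv // -mulr_natr -natrM mulnC card_orbit_stab.
by [].
Qed.

End Main.


Theorem corollary2p1p4 (K : fieldType) (d : nat) (W : {group {perm 'I_d}})
    (chi : {perm 'I_d} -> K) :
  [pchar K] =i pred0 ->
  one_dim_char W chi ->
  forall n : nat, g_poly n W chi = Z_poly n W chi.
Proof.
move=> ch0 Hchi n; rewrite /Z_poly /g_poly.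
symmetry; under eq_bigr => s _ do rewrite -prod_porbits prod_psum scaler_sumr.
rewrite (exchange_big_dep predT) //=.
under eq_bigr => j _ do rewrite -scaler_suml.
have key : \sum_(j : midx n d) @cc K d W chi n j *: mon K n d j =
           \sum_(j in Jset n W chi) #|W|%:R *: mon K n d j.
  rewrite (partition_big (fun j => orbit (pact_action n d) W j) predT) //=.
  rewrite [RHS](partition_big (fun j => orbit (pact_action n d) W j) predT) //=.
  apply: eq_bigr => O _.
  case: (pickP (fun x => orbit (pact_action n d) W x == O)) => [x /eqP <-|none].
    exact: per_orbit Hchi x.
  rewrite big_pred0; last by move=> j; have := none j; rewrite /= => ->.
  by rewrite big_pred0 // => j; have := none j; rewrite /= => ->; rewrite andbF.
rewrite /cc in key; rewrite key -scaler_sumr scalerA mulVf ?scale1r //.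
by move/pcharf0P: ch0 => ->; rewrite -lt0n cardG_gt0.
Qed.
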